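(* For every integer $n\ge 1$, \[ \mathrm{Od}(n!)=(-1)^{D(n)+\nu(\lfloor n/4\rfloor)}. \]
   Context: For $n\ge 1$ write $n=2^{v}o$ with $o$ odd; $\mathrm{Od}(n):=1$ if $o\equiv 1\pmod 4$ and $\mathrm{Od}(n):=-1$ if $o\equiv 3\pmod 4$. If $n$ has binary expansion $n=\sum_{i\ge0}b_i2^i$ ($b_i\in\{0,1\}$), then $\nu(n):=\sum_i b_i$ (with $\nu(0)=0$), and $D(n)$ is the number of indices $i$ with $b_ib_{i+1}=1$ (the number of, possibly overlapping, pairs of adjacent $1$s). *)

(* Defs.v *)
From mathcomp Require Import all_boot all_algebra.
Set Implicit Arguments. Unset Strict Implicit. Unset Printing Implicit Defensive.
Import GRing.Theory.

Definition bit (n i : nat) : bool := odd (n %/ 2 ^ i).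

Definition oddpart (n : nat) : nat := n %/ 2 ^ (logn 2 n).

Definition Od (n : nat) : int := if oddpart n %% 4 == 1 then 1%R else (-1)%R.

(* nu(n) = number of 1 bits; all bits of index >= n are 0 (n < 2^n) *)
Definition nu (n : nat) : nat := \sum_(i < n.+1) bit n i.

Definition D (n : nat) : nat := \sum_(i < n.+1) (bit n i && bit n i.+1).

(* Main.v *)
Require Import Defs.
From mathcomp Require Import all_boot all_algebra.
From mathcomp Require Import zify.
Import GRing.Theory.

Lemma oddpart_spec {a : nat} : (0 < a)%N ->
  odd (oddpart a) /\ a = (oddpart a * 2 ^ logn 2 a)%N.
Proof.
move=> a0; have [m cop e] := pfactor_coprime (isT : prime 2) a0.
have -> : oddpart a = m by rewrite /oddpart {1}e mulnK // expn_gt0.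
by rewrite -coprime2n.
Qed.

Lemma oddpartM (a b : nat) : (0 < a)%N -> (0 < b)%N ->
  oddpart (a * b) = (oddpart a * oddpart b)%N.
Proof.
move=> a0 b0; have [_ ea] := oddpart_spec a0; have [_ eb] := oddpart_spec b0.
have E : (a * b = (oddpart a * oddpart b) * (2 ^ logn 2 a * 2 ^ logn 2 b))%N.
  by rewrite mulnACA -ea -eb.
by rewrite [oddpart (a * b)]/oddpart lognM // expnD E mulnK // muln_gt0 !expn_gt0.
Qed.

Lemma mod4_odd {x : nat} : odd x -> (x %% 4 = 1 \/ x %% 4 = 3)%N.
Proof.
move=> ox; have : odd (x %% 4)%N by rewrite odd_mod.
have : (x %% 4 < 4)%N by rewrite ltn_mod.
by case: (x %% 4)%N => [|[|[|[|]]]] //; auto.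
Qed.

Lemma bitS n i : bit n i.+1 = bit (n %/ 2) i.
Proof. by rewrite /bit expnS divnMA. Qed.

Lemma bit0 n : bit n 0 = odd n.
Proof. by rewrite /bit expn0 divn1. Qed.

Lemma bit_small n i : (n < 2 ^ i)%N -> bit n i = false.
Proof. by move=> h; rewrite /bit divn_small. Qed.

Lemma bit_big n i : (n < i)%N -> bit n i = false.
Proof.
move=> h; apply: bit_small; apply: (ltn_trans h); exact: ltn_expl.
Qed.

Lemma nu_ext n k : (n < k)%N -> (\sum_(i < k) bit n i)%N = nu n.
Proof.
move=> h; rewrite /nu; elim: k h => [//|k IH].
rewrite ltnS leq_eqVlt => /orP [/eqP -> //| h].
by rewrite big_ord_recr /= IH // bit_big // addn0.
Qed.

Lemma D_ext n k : (n < k)%N -> (\sum_(i < k) (bit n i && bit n i.+1))%N = D n.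
Proof.
move=> h; rewrite /D; elim: k h => [//|k IH].
rewrite ltnS leq_eqVlt => /orP [/eqP -> //| h].
by rewrite big_ord_recr /= IH // bit_big // addn0.
Qed.

Lemma nu_rec n : nu n = (odd n + nu (n %/ 2))%N.
Proof.
rewrite -(@nu_ext n n.+2 (leqnSn n.+1)) big_ord_recl /= bit0.
under eq_bigr => i _ do rewrite /bump /= add1n bitS.
rewrite nu_ext //; lia.
Qed.

Lemma D_rec n : D n = ((odd n && odd (n %/ 2)) + D (n %/ 2))%N.
Proof.
rewrite -(@D_ext n n.+2 (leqnSn n.+1)) big_ord_recl /= bit0 bitS bit0.
under eq_bigr => i _ do rewrite /bump /= add1n [bit n i.+1]bitS [bit n i.+2]bitS.
rewrite D_ext //; lia.
Qed.

Local Open Scope ring_scope.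

Lemma OdM (a b : nat) : (0 < a)%N -> (0 < b)%N -> Od (a * b) = Od a * Od b.
Proof.
move=> a0 b0; rewrite /Od oddpartM // -modnMm.
have [oa _] := oddpart_spec a0; have [ob _] := oddpart_spec b0.
by case: (mod4_odd oa) => ->; case: (mod4_odd ob) => ->.
Qed.

Lemma Od2 : Od 2 = 1.
Proof. by rewrite /Od /oddpart (@logn_prime 2 2) //. Qed.

Lemma Od_odd (k : nat) : odd k -> Od k = if (k %% 4 == 1)%N then 1 else -1.
Proof.
move=> ok; rewrite /Od /oddpart.
have -> : logn 2 k = 0%N.
  apply: logn_coprime; by rewrite coprime2n.
by rewrite expn0 divn1.
Qed.

Lemma fact_gt0' n : (0 < n`!)%N. Proof. exact: fact_gt0. Qed.


Lemma Od_rec (n : nat) :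
  Od (n `!) = (-1) ^+ ((n.+1) %/ 4) * Od ((n %/ 2) `!).
Proof.
elim: n => [|n IH]; first by rewrite expr0 mul1r.
rewrite factS OdM // ?fact_gt0 // IH.
case: (boolP (odd n)) => on.
- set k := (n.+1 %/ 2)%N.
  have ek : n.+1 = (k * 2)%N by rewrite /k; lia.
  have k0 : (0 < k)%N by rewrite /k; lia.
  have hk : (n %/ 2 = k.-1)%N by rewrite /k; lia.
  have h4 : (n.+2 %/ 4 = n.+1 %/ 4)%N by lia.
  rewrite hk h4 ek OdM // Od2 mulr1.
  have -> : k`! = (k * k.-1`!)%N by rewrite -{1}(prednK k0) factS prednK.
  rewrite OdM ?fact_gt0 // -ek mulrA mulrA [Od k * _]mulrC //.
- have h2 : (n.+1 %/ 2 = n %/ 2)%N by lia.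
  rewrite h2 Od_odd //= mulrA; congr (_ * _).
  case: (boolP (n.+1 %% 4 == 1)%N) => /eqP h.
  + have -> : (n.+2 %/ 4 = n.+1 %/ 4)%N by lia.
    by rewrite mul1r.
  + have -> : (n.+2 %/ 4 = (n.+1 %/ 4).+1)%N by lia.
    by rewrite exprS.
Qed.

Theorem lemma3p1 (n : nat) : (1 <= n)%N ->
  Od (n `!) = (-1) ^+ (D n + nu (n %/ 4))%N :> int.
Proof.
move=> _; elim/ltn_ind: n => -[|n] IH; first by rewrite /D /nu !big_ord1.
rewrite Od_rec IH; last by lia.
rewrite -exprD -[LHS]signr_odd -[RHS]signr_odd; congr (_ ^+ (nat_of_bool _)).
rewrite [D n.+1]D_rec (nu_rec (n.+1 %/ 4)).
have -> : (n.+1 %/ 4 %/ 2 = n.+1 %/ 2 %/ 4)%N by lia.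
have -> : (n.+2 %/ 4 = n.+1 %/ 4 + (odd n.+1 && odd (n.+1 %/ 2)))%N by lia.
rewrite !oddD; set a := odd (n.+1 %/ 4); set b := (odd _ && odd _).
set c := odd (D _); set d := odd (nu _).
by case: a; case: b; case: c; case: d.
Qed.
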